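(* For every integer $n\ge 1$, $\gamma^{DLD}(P_n\square P_2)=n$.
   Context: $P_k$ denotes the path on $k$ vertices. The Cartesian product $G\square H$ has vertex set $V(G)\times V(H)$, with $(u,v)$ adjacent to $(u',v')$ iff either $u=u'$ and $vv'\in E(H)$, or $uu'\in E(G)$ and $v=v'$. For a vertex $u$, $N[u]$ is its closed neighbourhood. A code is a non-empty subset $C$ of the vertex set $V$; $I(C;u)=N[u]\cap C$. A code $C$ is solid-locating-dominating if $I(C;u)\ne\emptyset$ for every $u\in V\setminus C$ and $I(C;u)\not\subseteq I(C;v)$ for all distinct $u,v\in V\setminus C$; $\gamma^{DLD}$ is the minimum size of such a code. *)

(* Defs.v *)
From mathcomp Require Import all_boot.
Set Implicit Arguments. Unset Strict Implicit. Unset Printing Implicit Defensive.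

(* A simple graph on a finite vertex type T is given by an adjacency relation e
   (assumed symmetric and irreflexive where relevant). *)

Definition cnbhd (T : finType) (e : rel T) (u : T) : {set T} :=
  [set v | (v == u) || e u v].

Definition Icode (T : finType) (e : rel T) (C : {set T}) (u : T) : {set T} :=
  cnbhd e u :&: C.

Definition is_DLD (T : finType) (e : rel T) (C : {set T}) : bool :=
  [&& C != set0,
      [forall u in ~: C, Icode e C u != set0] &
      [forall u in ~: C, forall v in ~: C,
          (u != v) ==> ~~ (Icode e C u \subset Icode e C v)]].

(* gamma^DLD: minimum size of a DLD code (the default #|T| is never smaller
   than the size of any code, so it does not affect the minimum whenever a
   DLD code exists). *)
Definition gammaDLD (T : finType) (e : rel T) : nat :=
  \big[minn/#|T|]_(C : {set T} | is_DLD e C) #|C|.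

Definition path_rel (k : nat) : rel 'I_k :=
  fun i j => (i.+1 == j :> nat) || (j.+1 == i :> nat).

Definition cart_rel (A B : finType) (eA : rel A) (eB : rel B) : rel (A * B) :=
  fun x y => ((x.1 == y.1) && eB x.2 y.2) || (eA x.1 y.1 && (x.2 == y.2)).

(* Main.v *)
Require Import Defs.
From mathcomp Require Import all_boot zify.
Set Implicit Arguments. Unset Strict Implicit.

Notation TT n := ('I_n * 'I_2)%type.
Notation EE n := (cart_rel (@path_rel n) (@path_rel 2)).

Definition col n (x : TT n) : nat := x.1.
Definition row n (x : TT n) : nat := x.2.
Lemma row_lt n (x : TT n) : row x < 2. Proof. exact: ltn_ord. Qed.

Lemma adjE n (x y : TT n) : EE n x y =
  (col x == col y) && (row x != row y) ||
  (((col x).+1 == col y) || ((col y).+1 == col x)) && (row x == row y).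
Proof.
rewrite /cart_rel /path_rel.
have H : forall a b, a < 2 -> b < 2 -> (a.+1 == b) || (b.+1 == a) = (a != b).
  by case=> [|[|]] [|[|]].
by rewrite H ?ltn_ord.
Qed.

Lemma eqTE n (x y : TT n) : (x == y) = (col x == col y) && (row x == row y).
Proof. by case: x y => [x1 x2] [y1 y2]. Qed.

Lemma memI n (C : {set TT n}) u x : x \in Icode (EE n) C u =
  (x \in C) && (((col x == col u) && (row x == row u)) ||
  ((col u == col x) && (row u != row x) ||
  (((col u).+1 == col x) || ((col x).+1 == col u)) && (row u == row x))).
Proof. by rewrite /Icode /cnbhd !inE andbC eqTE adjE. Qed.

Definition w n (C : {set TT n}) (u : TT n) :=
  let k := #|Icode (EE n) C u| in if k <= 1 then 6 else if k == 2 then 3 else 2.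

Lemma neqC n (C : {set TT n}) (p q : TT n) : p \in C -> q \notin C ->
  ~~ ((col p == col q) && (row p == row q)).
Proof. by move=> pC qC; rewrite -eqTE; apply/eqP => pq; move: qC; rewrite -pq pC. Qed.

Lemma cardU3 (T : finType) (A B D : {set T}) : #|A :|: B :|: D| <= #|A| + #|B| + #|D|.
Proof.
have h := cardsUI (A :|: B) D; have h2 := cardsUI A B; lia.
Qed.

Lemma cardU2 (T : finType) (A B : {set T}) : #|A :|: B| <= #|A| + #|B|.
Proof. have h := cardsUI A B; lia. Qed.

Lemma local n (C : {set TT n}) (hC : is_DLD (EE n) C) c (cC : c \in C) :
  \sum_(u in [set u in ~: C | c \in Icode (EE n) C u]) w C u <= 6.
Proof.
move: hC => /and3P [_ /forall_inP hdom /forall_inP hsol].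
have sol : forall u v, u \notin C -> v \notin C -> u != v ->
    exists2 x, x \in Icode (EE n) C u & x \notin Icode (EE n) C v.
  move=> u v uC vC uv; have := hsol u; rewrite inE uC => /(_ isT) /forall_inP /(_ v).
  by rewrite inE vC => /(_ isT) /implyP /(_ uv) /subsetPn [x ? ?]; exists x.
set S := [set u in ~: C | _].
have memS : forall u, u \in S = (u \notin C) && (c \in Icode (EE n) C u).
  by move=> u; rewrite !inE.
have w6 : forall u, w C u <= 6 by move=> u; rewrite /w; case: ifP => //; case: ifP.
case: (boolP [exists u in S, #|Icode (EE n) C u| <= 1]).
  case/exists_inP => u uS u1.
  have SE : S = [set u].
    apply/setP => v; rewrite inE; apply/idP/eqP => [vS|->//].
    case: (eqVneq u v) => // uv.
    move: (uS) (vS); rewrite !memS => /andP [uC cu] /andP [vC cv].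
    have [x xu xv] := sol u v uC vC uv.
    have : x = c by move/card_le1_eqP: u1 => /(_ x c xu cu).
    by move=> xc; rewrite xc cv in xv.
  by rewrite SE big_set1.
move/exists_inPn => no1.
case: (leqP #|S| 2) => S2.
  apply: (@leq_trans (\sum_(u in S) 3)).
    apply: leq_sum => u uS; have := no1 u uS; rewrite /w => h.
    by rewrite (negbTE h); case: ifP.
  rewrite sum_nat_const; lia.
set Ta := [set y : TT n | (col y == col c) && (row y != row c)].
set Tl := [set y : TT n | ((col y).+1 == col c) && (row y == row c)].
set Tr := [set y : TT n | (col y == (col c).+1) && (row y == row c)].
have uniq3 : forall x y, ((x \in Ta) && (y \in Ta)) || ((x \in Tl) && (y \in Tl))
    || ((x \in Tr) && (y \in Tr)) -> x = y.
  move=> x y; rewrite /Ta /Tl /Tr !inE => h; apply/eqP; rewrite eqTE.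
  have := row_lt x; have := row_lt y; have := row_lt c; lia.
have cTa : #|Ta| <= 1 by apply/card_le1_eqP => x y hx hy; apply: uniq3; rewrite hx hy.
have cTl : #|Tl| <= 1 by apply/card_le1_eqP => x y hx hy; apply: uniq3; rewrite hx hy orbT.
have cTr : #|Tr| <= 1 by apply/card_le1_eqP => x y hx hy; apply: uniq3; rewrite hx hy !orbT.
have sub : S \subset Ta :|: Tl :|: Tr.
  apply/subsetP => u uS; move: (uS); rewrite memS memI => /andP [uC h].
  have := neqC cC uC; move: h; rewrite /Ta /Tl /Tr !inE.
  have := row_lt u; have := row_lt c; lia.
have [a aS aT] : exists2 a, a \in S & a \in Ta.
  case: (boolP [exists a in S, a \in Ta]) => [/exists_inP [a0 ? ?]|/exists_inPn h]; first by exists a0.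
  have : #|S| <= #|Tl :|: Tr|.
    apply: subset_leq_card; apply/subsetP => u uS.
    by move: (subsetP sub u uS) (h u uS); rewrite !in_setU => + /negPf na; rewrite na.
  have := cardU2 Tl Tr; lia.
have [l lS lT] : exists2 a, a \in S & a \in Tl.
  case: (boolP [exists a in S, a \in Tl]) => [/exists_inP [a0 ? ?]|/exists_inPn h]; first by exists a0.
  have : #|S| <= #|Ta :|: Tr|.
    apply: subset_leq_card; apply/subsetP => u uS.
    by move: (subsetP sub u uS) (h u uS); rewrite !in_setU => + /negPf na; rewrite na orbF.
  have := cardU2 Ta Tr; lia.
have [r rS rT] : exists2 a, a \in S & a \in Tr.
  case: (boolP [exists a in S, a \in Tr]) => [/exists_inP [a0 ? ?]|/exists_inPn h]; first by exists a0.
  have : #|S| <= #|Ta :|: Tl|.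
    apply: subset_leq_card; apply/subsetP => u uS.
    by move: (subsetP sub u uS) (h u uS); rewrite !in_setU => + /negPf na; rewrite na orbF.
  have := cardU2 Ta Tl; lia.
move: (aS) (lS) (rS); rewrite !memS => /andP [aC ca] /andP [lC cl] /andP [rC cr].
move: (aT) (lT) (rT); rewrite /Ta /Tl /Tr !inE => aT' lT' rT'.
have ra := row_lt a; have rl := row_lt l; have rr := row_lt r; have rc := row_lt c.
have al : a != l by rewrite eqTE; clear -aT' lT'; lia.
have ar : a != r by rewrite eqTE; clear -aT' rT'; lia.
have la : l != a by rewrite eqTE; clear -aT' lT'; lia.
have ra' : r != a by rewrite eqTE; clear -aT' rT'; lia.
have [x xa xl] := sol a l aC lC al.
have [y ya yr] := sol a r aC rC ar.
have [z zl za] := sol l a lC aC la.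
have [z' zr za'] := sol r a rC aC ra'.
have xC : x \in C by move: xa; rewrite memI => /andP [].
have yC : y \in C by move: ya; rewrite memI => /andP [].
have zC : z \in C by move: zl; rewrite memI => /andP [].
have z'C : z' \in C by move: zr; rewrite memI => /andP [].
move: xa xl ya yr zl za zr za' ca cl cr; rewrite !memI xC yC zC z'C cC /= => xa xl ya yr zl za zr za' ca cl cr.
have hx := row_lt x; have hy := row_lt y; have hz := row_lt z; have hz' := row_lt z'.
have xco : col x = (col c).+1 /\ row x = 1 - row c.
  have := neqC xC aC; move: xa xl; clear -aT' lT' ra rl rc hx; lia.
have yco : (col y).+1 = col c /\ row y = 1 - row c.
  have := neqC yC aC; move: ya yr; clear -aT' rT' ra rr rc hy; lia.
have zco : (col z).+2 = col c /\ row z = row c.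
  have := neqC zC lC; move: zl za; clear -aT' lT' ra rl rc hz; lia.
have z'co : col z' = (col c).+2 /\ row z' = row c.
  have := neqC z'C rC; move: zr za'; clear -aT' rT' ra rr rc hz'; lia.
have g3a : 2 < #|Icode (EE n) C a|.
  apply/card_gt2P; exists c, x, y; rewrite !memI !eqTE xC yC cC /=.
  clear -aT' xco yco ra rc; split; split; lia.
have g3l : 2 < #|Icode (EE n) C l|.
  apply/card_gt2P; exists c, y, z; rewrite !memI !eqTE zC yC cC /=.
  clear -lT' zco yco rl rc; split; split; lia.
have g3r : 2 < #|Icode (EE n) C r|.
  apply/card_gt2P; exists c, x, z'; rewrite !memI !eqTE xC z'C cC /=.
  clear -rT' xco z'co rr rc; split; split; lia.
apply: (@leq_trans (\sum_(u in S) 2)).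
  apply: leq_sum => u uS.
  have : 2 < #|Icode (EE n) C u|.
    move: (subsetP sub u uS); rewrite !in_setU => /orP [/orP [h|h]|h].
    - by rewrite (uniq3 u a) // h aT.
    - by rewrite (uniq3 u l) // h lT orbT.
    - by rewrite (uniq3 u r) // h rT !orbT.
  rewrite /w; case: ifP => [h1 h2|_]; first by clear -h1 h2; lia.
  by case: ifP => [/eqP -> //|].
rewrite sum_nat_const.
have S3 : #|S| <= 3.
  apply: (leq_trans (subset_leq_card sub)); apply: (leq_trans (cardU3 Ta Tl Tr)).
  by rewrite -[3]/(1+1+1); apply: leq_add; [apply: leq_add|].
exact: (leq_mul S3 (leqnn 2)).
Qed.

Lemma lower n (C : {set TT n}) : is_DLD (EE n) C -> n <= #|C|.
Proof.
move=> hC; have hC' := hC.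
move: hC' => /and3P [_ /forall_inP hdom _].
have A : 6 * #|~: C| <= \sum_(u in ~: C) \sum_(c in Icode (EE n) C u) w C u.
  rewrite mulnC -sum_nat_const; apply: leq_sum => u uC; rewrite sum_nat_const.
  have : 0 < #|Icode (EE n) C u| by rewrite card_gt0; exact: hdom.
  rewrite /w; set k := #|_| => h0; case: ifP => h1.
    by have -> : k = 1 by clear -h0 h1; lia.
  case: ifP => [/eqP -> //| h2]; clear -h1 h2; lia.
have B : \sum_(u in ~: C) \sum_(c in Icode (EE n) C u) w C u =
    \sum_(c in C) \sum_(u in [set u in ~: C | c \in Icode (EE n) C u]) w C u.
  rewrite (exchange_big_dep (mem C)) /=; last by move=> u c _; rewrite memI => /andP [].
  by apply: eq_bigr => c0 _; apply: eq_bigl => u; rewrite !inE.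
have Cb : \sum_(c in C) \sum_(u in [set u in ~: C | c \in Icode (EE n) C u]) w C u
    <= \sum_(c in C) 6 by apply: leq_sum => c cC; exact: local.
rewrite sum_nat_const -B in Cb.
have D := cardsC C; rewrite card_prod !card_ord in D.
have := leq_trans A Cb; clear -D; lia.
Qed.

Lemma bigmin_leq (I : finType) (P : pred I) (F : I -> nat) d i0 :
  P i0 -> \big[minn/d]_(i | P i) F i <= F i0.
Proof.
move=> Pi0.
have : i0 \in index_enum I by rewrite mem_index_enum.
elim: (index_enum I) => [//|x s IH]; rewrite inE big_cons => /orP [/eqP <-|hs].
  by rewrite Pi0 geq_minl.
case: ifP => _; last exact: IH.
by apply: leq_trans (geq_minr _ _) (IH hs).
Qed.

Lemma upper n (hn : 1 <= n) : is_DLD (EE n) [set x : TT n | row x == 0].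
Proof.
apply/and3P; split.
- apply/set0Pn; exists (Ordinal hn, ord0); by rewrite inE.
- apply/forall_inP => u; rewrite !inE => hu.
  apply/set0Pn; exists (u.1, ord0); rewrite memI inE /col /row /=; have := row_lt u.
  move: hu; rewrite /row; clear; lia.
- apply/forall_inP => u; rewrite !inE => hu; apply/forall_inP => v; rewrite !inE => hv.
  apply/implyP => uv; apply/subsetPn; exists (u.1, ord0).
    rewrite memI inE /col /row /=; have := row_lt u; move: hu; rewrite /row; clear; lia.
  rewrite memI inE /col /row /=; have := row_lt u; have := row_lt v; move: hu hv uv.
  rewrite eqTE /row /col; clear; lia.
Qed.

Lemma card_upper n : #|[set x : TT n | row x == 0]| = n.
Proof.
have -> : [set x : TT n | row x == 0] = [set (i, ord0) | i : 'I_n].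
  apply/setP => x; rewrite inE; apply/idP/imsetP => [h|[i _ ->] //].
  exists x.1 => //; case: x h => x1 x2; rewrite /row /= => h; congr pair; exact/val_inj/eqP.
rewrite card_imset ?card_ord //; by move=> i j [].
Qed.

Theorem mainTheorem18 (n : nat) (hn : 1 <= n) :
  gammaDLD (cart_rel (@path_rel n) (@path_rel 2)) = n.
Proof.
apply/eqP; rewrite eqn_leq; apply/andP; split.
  apply: leq_trans (bigmin_leq _ _ (upper hn)) _; by rewrite card_upper.
rewrite /gammaDLD; apply: (big_ind (fun x => n <= x)).
- by rewrite card_prod !card_ord; clear; lia.
- by move=> x y hx hy; rewrite leq_min hx hy.
- by move=> C hC; exact: lower.
Qed.
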